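(* Let ${}^*\mathbb{Z}=\mathbb{Z}^I/\mathcal{U}$ be an ultrapower of $\mathbb{Z}$ with respect to a nonprincipal ultrafilter $\mathcal{U}$ on a countably infinite set $I$. The map $\mathfrak{m}\mapsto\mathcal{F}(\mathfrak{m})$ is a one-to-one correspondence between the maximal ideals of ${}^*\mathbb{Z}$ and the maximal filters on $\operatorname{pr}({}^*\mathbb{Z})$. Moreover, for a maximal ideal $\mathfrak{m}$, $\mathcal{F}(\mathfrak{m})$ is principal if and only if $\mathfrak{m}=p\,{}^*\mathbb{Z}$ for some $p\in\mathcal{P}({}^*\mathbb{N})$.
   Context: ${}^*\mathbb{N}=\mathbb{N}^I/\mathcal{U}$. For $x,y\in{}^*\mathbb{Z}$, $x\mid y$ means $y=zx$ for some $z\in{}^*\mathbb{Z}$. $\mathcal{P}({}^*\mathbb{N})$ is the set of $p\in{}^*\mathbb{N}$, $p\neq1$, whose only divisors in ${}^*\mathbb{Z}$ are $\pm1,\pm p$. For $n\in{}^*\mathbb{Z}$, $\operatorname{pr}(n)=\{p\in\mathcal{P}({}^*\mathbb{N}):p\mid n\}$ and $\operatorname{pr}({}^*\mathbb{Z})=\{\operatorname{pr}(n):n\in{}^*\mathbb{Z}\}$. A filter on $\operatorname{pr}({}^*\mathbb{Z})$ is $\mathcal{F}\subseteq\operatorname{pr}({}^*\mathbb{Z})$ with (a) $\emptyset\notin\mathcal{F}$; (b) closed under intersections of two members; (c) if $\operatorname{pr}(n)\in\mathcal{F}$ and $\operatorname{pr}(n)\subseteq\operatorname{pr}(m)$ then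 $\operatorname{pr}(m)\in\mathcal{F}$. It is maximal if no filter properly contains it, and principal if there is $n\in{}^*\mathbb{Z}$ such that for $S\in\operatorname{pr}({}^*\mathbb{Z})$, $S\in\mathcal{F}$ iff $\operatorname{pr}(n)\subseteq S$. For an ideal $J$, $\mathcal{F}(J)=\{\operatorname{pr}(n):n\in J\}$. *)

(* Defs.v *)
(* the ultrapower *Z = Z^I/U built as a genuine quotient type
   (equivalence classes), with ring operations defined on representatives. *)
From Stdlib Require Import ZArith ClassicalEpsilon.
Open Scope Z_scope.

Definition ultrafilter {I : Type} (U : (I -> Prop) -> Prop) : Prop :=
  ~ U (fun _ => False) /\
  U (fun _ => True) /\
  (forall A B : I -> Prop, U A -> (forall i, A i -> B i) -> U B) /\
  (forall A B : I -> Prop, U A -> U B -> U (fun i => A i /\ B i)) /\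
  (forall A : I -> Prop, U A \/ U (fun i => ~ A i)).

Definition nonprincipal {I : Type} (U : (I -> Prop) -> Prop) : Prop :=
  forall i : I, ~ U (fun j => j = i).

Definition countably_infinite (I : Type) : Prop :=
  exists f : nat -> I, (forall a b, f a = f b -> a = b) /\ (forall y, exists x, f x = y).

Section Ultrapower.
Context {I : Type} (U : (I -> Prop) -> Prop).

Definition eqU (f g : I -> Z) : Prop := U (fun i => f i = g i).
Definition cls (f : I -> Z) : (I -> Z) -> Prop := fun g => eqU f g.

Definition starZ : Type := {S : (I -> Z) -> Prop | exists f, S = cls f}.

Definition mk (f : I -> Z) : starZ := exist _ (cls f) (ex_intro _ f eq_refl).
Definition rep (x : starZ) : I -> Z :=
  proj1_sig (constructive_indefinite_description _ (proj2_sig x)).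

Definition szero : starZ := mk (fun _ => 0).
Definition sone : starZ := mk (fun _ => 1).
Definition sadd (x y : starZ) : starZ := mk (fun i => rep x i + rep y i).
Definition smul (x y : starZ) : starZ := mk (fun i => rep x i * rep y i).
Definition sopp (x : starZ) : starZ := mk (fun i => - rep x i).

Definition inStarN (x : starZ) : Prop := U (fun i => 0 <= rep x i).

Definition sdvd (x y : starZ) : Prop := exists z, y = smul z x.

Definition sprime (p : starZ) : Prop :=
  inStarN p /\ p <> sone /\
  forall d, sdvd d p -> d = sone \/ d = sopp sone \/ d = p \/ d = sopp p.

Definition pr (n : starZ) : starZ -> Prop := fun p => sprime p /\ sdvd p n.
Definition in_prZ (S : starZ -> Prop) : Prop := exists n, S = pr n.

Definition subset (S T : starZ -> Prop) : Prop := forall x, S x -> T x.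

Definition is_filter (F : (starZ -> Prop) -> Prop) : Prop :=
  (forall S, F S -> in_prZ S) /\
  ~ F (fun _ => False) /\
  (forall S T, F S -> F T -> F (fun x => S x /\ T x)) /\
  (forall n m, F (pr n) -> subset (pr n) (pr m) -> F (pr m)).

Definition maximal_filter (F : (starZ -> Prop) -> Prop) : Prop :=
  is_filter F /\
  ~ exists G, is_filter G /\ (forall S, F S -> G S) /\ G <> F.

Definition principal_filter (F : (starZ -> Prop) -> Prop) : Prop :=
  exists n, forall S, in_prZ S -> (F S <-> subset (pr n) S).

Definition is_ideal (J : starZ -> Prop) : Prop :=
  J szero /\
  (forall x y, J x -> J y -> J (sadd x y)) /\
  (forall r x, J x -> J (smul r x)).

Definition maximal_ideal (J : starZ -> Prop) : Prop :=
  is_ideal J /\ ~ J sone /\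
  forall K, is_ideal K -> subset J K -> K = J \/ K sone.

Definition pZ (p : starZ) : starZ -> Prop := fun x => exists z, x = smul p z.

Definition Fof (J : starZ -> Prop) : (starZ -> Prop) -> Prop :=
  fun S => exists n, J n /\ S = pr n.

End Ultrapower.

(* Main.v *)
Require Import Defs.
From Stdlib Require Import ZArith Znumtheory Lia ClassicalEpsilon Classical
  FunctionalExtensionality PropExtensionality ProofIrrelevance.
Open Scope Z_scope.

Lemma Z_prime_div_pos : forall n, 0 <= n -> 2 <= n -> exists p, prime p /\ (p | n).
Proof.
  intros n Hn. pattern n. apply Z_lt_induction; [|exact Hn].
  intros x IH H2.
  destruct (prime_dec x) as [Hp|Hp].
  - exists x. split; [exact Hp | apply Z.divide_refl].
  - destruct (not_prime_divide x ltac:(lia) Hp) as [m [Hm Hd]].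
    destruct (IH m ltac:(lia) ltac:(lia)) as [p [Hp' Hpd]].
    exists p. split; [exact Hp'|]. eapply Z.divide_trans; eauto.
Qed.

Lemma Z_prime_div : forall z, ~ (z | 1) -> exists p, prime p /\ (p | z).
Proof.
  intros z Hz.
  destruct (Z.eq_dec z 0) as [->|Hz0].
  - exists 2. split; [exact prime_2 | apply Z.divide_0_r].
  - assert (Ha : 2 <= Z.abs z).
    { destruct (Z.eq_dec (Z.abs z) 1) as [E|E]; [|lia].
      exfalso; apply Hz. assert (z = 1 \/ z = -1) as [->| ->] by lia.
      + apply Z.divide_refl.
      + exists (-1). reflexivity. }
    destruct (Z_prime_div_pos (Z.abs z) ltac:(lia) Ha) as [p [Hp Hd]].
    exists p. split; [exact Hp|]. apply Z.divide_abs_r; exact Hd.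
Qed.

Section S.
Variable I : Type.
Variable U : (I -> Prop) -> Prop.
Hypothesis hU : ultrafilter U.

Lemma AE_mono (A B : I -> Prop) : U A -> (forall i, A i -> B i) -> U B.
Proof. destruct hU as [_ [_ [H _]]]. eauto. Qed.
Lemma AE_and (A B : I -> Prop) : U A -> U B -> U (fun i => A i /\ B i).
Proof. destruct hU as [_ [_ [_ [H _]]]]. eauto. Qed.
Lemma AE_all (A : I -> Prop) : (forall i, A i) -> U A.
Proof. intros H. destruct hU as [_ [T _]]. eapply AE_mono; [exact T|]. auto. Qed.
Lemma AE_contra (A : I -> Prop) : U A -> (forall i, A i -> False) -> False.
Proof. intros H1 H2. destruct hU as [F _]. apply F. eapply AE_mono; eauto. Qed.
Lemma AE_or (A B : I -> Prop) : U (fun i => A i \/ B i) -> U A \/ U B.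
Proof.
  intros H. destruct hU as [_ [_ [_ [_ D]]]]. destruct (D A) as [HA|HA]; [auto|].
  right. eapply AE_mono; [exact (AE_and _ _ H HA)|]. simpl. intros i [[?|?] ?]; tauto.
Qed.
Lemma AE_not (A : I -> Prop) : ~ U A -> U (fun i => ~ A i).
Proof. intros H. destruct hU as [_ [_ [_ [_ D]]]]. destruct (D A); tauto. Qed.

Lemma sig_ext (x y : starZ U) : proj1_sig x = proj1_sig y -> x = y.
Proof.
  destruct x as [S p], y as [T q]; simpl; intros ->. f_equal. apply proof_irrelevance.
Qed.

Lemma mk_eq_iff f g : mk U f = mk U g <-> eqU U f g.
Proof.
  split.
  - intros H. apply (f_equal (@proj1_sig _ _)) in H. simpl in H.
    assert (E : cls U f g = cls U g g) by (rewrite H; reflexivity).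
    unfold cls in E. rewrite E. unfold eqU. apply AE_all. auto.
  - intros H. apply sig_ext. simpl. extensionality h. apply propositional_extensionality.
    unfold cls, eqU in *. split; intros H'.
    + eapply AE_mono; [exact (AE_and _ _ H H')|]. simpl. intros i [? ?]; congruence.
    + eapply AE_mono; [exact (AE_and _ _ H H')|]. simpl. intros i [? ?]; congruence.
Qed.

Lemma mk_surj (x : starZ U) : exists f, x = mk U f.
Proof. destruct x as [S [f ->]]. exists f. apply sig_ext. reflexivity. Qed.

Lemma rep_spec (x : starZ U) : x = mk U (rep U x).
Proof.
  unfold rep. destruct (constructive_indefinite_description _ _) as [f Hf]. simpl.
  apply sig_ext. simpl. exact Hf.
Qed.

Lemma rep_mk f : U (fun i => rep U (mk U f) i = f i).
Proof.
  pose proof (rep_spec (mk U f)) as H. symmetry in H. apply mk_eq_iff in H. exact H.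
Qed.

Lemma sadd_mk f g : sadd U (mk U f) (mk U g) = mk U (fun i => f i + g i).
Proof.
  apply mk_eq_iff. unfold eqU. eapply AE_mono; [exact (AE_and _ _ (rep_mk f) (rep_mk g))|].
  simpl. intros i [-> ->]. reflexivity.
Qed.
Lemma smul_mk f g : smul U (mk U f) (mk U g) = mk U (fun i => f i * g i).
Proof.
  apply mk_eq_iff. unfold eqU. eapply AE_mono; [exact (AE_and _ _ (rep_mk f) (rep_mk g))|].
  simpl. intros i [-> ->]. reflexivity.
Qed.

Lemma sopp_mk f : sopp U (mk U f) = mk U (fun i => - f i).
Proof.
  apply mk_eq_iff. unfold eqU. eapply AE_mono; [exact (rep_mk f)|].
  simpl. intros i ->. reflexivity.
Qed.

Lemma dvd_mk f g : sdvd U (mk U f) (mk U g) <-> U (fun i => (f i | g i)).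
Proof.
  split.
  - intros [z Hz]. destruct (mk_surj z) as [h ->]. rewrite smul_mk in Hz.
    apply mk_eq_iff in Hz. eapply AE_mono; [exact Hz|]. simpl. intros i E.
    exists (h i). auto.
  - intros H. exists (mk U (fun i => g i / f i)). rewrite smul_mk. apply mk_eq_iff.
    eapply AE_mono; [exact H|]. simpl. intros i [c Hc]. rewrite Hc.
    destruct (Z.eq_dec (f i) 0) as [E|E].
    + rewrite E. rewrite Z.mul_0_r. reflexivity.
    + rewrite Z.div_mul by exact E. reflexivity.
Qed.

Lemma inStarN_mk f : inStarN U (mk U f) <-> U (fun i => 0 <= f i).
Proof.
  unfold inStarN. split; intros H.
  - eapply AE_mono; [exact (AE_and _ _ H (rep_mk f))|]. simpl. intros i [? E]; lia.
  - eapply AE_mono; [exact (AE_and _ _ H (rep_mk f))|]. simpl. intros i [? E]; lia.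
Qed.

Ltac mkall := repeat match goal with x : starZ U |- _ =>
  let f := fresh "f" in destruct (mk_surj x) as [f ->] end.
Ltac ringid := mkall; unfold szero, sone; repeat rewrite ?sadd_mk, ?smul_mk;
  apply mk_eq_iff; apply AE_all; intros; cbv beta; ring.

Lemma dvd_refl x : sdvd U x x.
Proof. mkall. apply dvd_mk. apply AE_all. intros; apply Z.divide_refl. Qed.
Lemma dvd_trans x y z : sdvd U x y -> sdvd U y z -> sdvd U x z.
Proof. mkall. rewrite !dvd_mk. intros H1 H2. eapply AE_mono; [exact (AE_and _ _ H1 H2)|].
  simpl. intros i [? ?]; eapply Z.divide_trans; eauto. Qed.
Lemma dvd_add d x y : sdvd U d x -> sdvd U d y -> sdvd U d (sadd U x y).
Proof. mkall. rewrite sadd_mk, !dvd_mk. intros H1 H2. eapply AE_mono; [exact (AE_and _ _ H1 H2)|].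
  simpl. intros i [? ?]; apply Z.divide_add_r; auto. Qed.
Lemma dvd_mul_l d r y : sdvd U d y -> sdvd U d (smul U r y).
Proof. mkall. rewrite smul_mk, !dvd_mk. intros H1. eapply AE_mono; [exact H1|].
  simpl. intros i ?; apply Z.divide_mul_r; auto. Qed.
Lemma dvd_mul_r d r y : sdvd U d y -> sdvd U d (smul U y r).
Proof. mkall. rewrite smul_mk, !dvd_mk. intros H1. eapply AE_mono; [exact H1|].
  simpl. intros i ?; apply Z.divide_mul_l; auto. Qed.
Lemma dvd_zero d : sdvd U d (szero U).
Proof. mkall. unfold szero. apply dvd_mk. apply AE_all. intros; apply Z.divide_0_r. Qed.
Lemma smul_comm x y : smul U x y = smul U y x.
Proof. ringid. Qed.

Lemma gcd_ex x y : exists g, sdvd U g x /\ sdvd U g y /\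
  (forall d, sdvd U d x -> sdvd U d y -> sdvd U d g) /\
  exists a b, g = sadd U (smul U a x) (smul U b y).
Proof.
  mkall. rename f into f1, f0 into f2.
  assert (B : forall i, exists uv : Z * Z, fst uv * f2 i + snd uv * f1 i = Z.gcd (f2 i) (f1 i)).
  { intros i. destruct (Zis_gcd_bezout _ _ _ (Zgcd_is_gcd (f2 i) (f1 i))) as [u v E].
    exists (u, v). exact E. }
  exists (mk U (fun i => Z.gcd (f2 i) (f1 i))). repeat split.
  - apply dvd_mk, AE_all. intros; apply Z.gcd_divide_l.
  - apply dvd_mk, AE_all. intros; apply Z.gcd_divide_r.
  - intros d. mkall. rewrite !dvd_mk. intros H1 H2.
    eapply AE_mono; [exact (AE_and _ _ H1 H2)|]. simpl. intros i [? ?]; apply Z.gcd_greatest; auto.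
  - exists (mk U (fun i => fst (proj1_sig (constructive_indefinite_description _ (B i))))).
    exists (mk U (fun i => snd (proj1_sig (constructive_indefinite_description _ (B i))))).
    rewrite !smul_mk, sadd_mk. apply mk_eq_iff, AE_all. intros i.
    destruct (constructive_indefinite_description _ (B i)) as [uv E]. simpl. lia.
Qed.

Lemma prime_lift f : U (fun i => prime (f i)) -> sprime U (mk U f).
Proof.
  intros H. split; [|split].
  - apply inStarN_mk. eapply AE_mono; [exact H|]. intros i Hp; apply prime_ge_2 in Hp; lia.
  - unfold sone. rewrite mk_eq_iff. intros E. eapply AE_contra; [exact (AE_and _ _ H E)|].
    simpl. intros i [Hp Ei]. apply prime_ge_2 in Hp; lia.
  - intros d Hd. destruct (mk_surj d) as [g ->]. apply dvd_mk in Hd.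
    assert (Hor : U (fun i => (g i = 1 \/ g i = -1) \/ (g i = f i \/ g i = - f i))).
    { eapply AE_mono; [exact (AE_and _ _ H Hd)|]. simpl. intros i [Hp Hdi].
      destruct (prime_divisors _ Hp _ Hdi) as [?|[?|[?|?]]]; tauto. }
    unfold sone. rewrite !sopp_mk.
    apply AE_or in Hor as [Ho|Ho]; apply AE_or in Ho as [Ho|Ho].
    + left. apply mk_eq_iff. exact Ho.
    + right; left. apply mk_eq_iff. unfold eqU.
      exact Ho.
    + right; right; left. apply mk_eq_iff. exact Ho.
    + right; right; right. apply mk_eq_iff. unfold eqU.
      exact Ho.
Qed.

Lemma sprime_not_dvd_one p : sprime U p -> ~ sdvd U p (sone U).
Proof.
  intros [HN [H1 _]] Hd. mkall. apply (proj1 (inStarN_mk _)) in HN. unfold sone in *.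
  apply dvd_mk in Hd. apply H1. apply mk_eq_iff.
  eapply AE_mono; [exact (AE_and _ _ HN Hd)|]. simpl. intros i [? ?].
  apply Z.divide_1_r_nonneg; assumption.
Qed.

Lemma unit_pr_empty x p : sdvd U x (sone U) -> ~ pr U x p.
Proof. intros Hx [Hp Hd]. apply (sprime_not_dvd_one p Hp). eapply dvd_trans; eauto. Qed.

Lemma nonunit_pr x : ~ sdvd U x (sone U) -> exists p, pr U x p.
Proof.
  intros Hx. mkall. unfold sone in Hx. rewrite dvd_mk in Hx. apply AE_not in Hx.
  assert (B : forall i, exists p, prime p /\ (~ (f i | 1) -> (p | f i))).
  { intros i. destruct (classic (f i | 1)) as [E|E].
    - exists 2. split; [exact prime_2| tauto].
    - destruct (Z_prime_div _ E) as [p [? ?]]. exists p; auto. }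
  exists (mk U (fun i => proj1_sig (constructive_indefinite_description _ (B i)))).
  split.
  - apply prime_lift. apply AE_all. intros i.
    destruct (constructive_indefinite_description _ (B i)) as [p [? ?]]; auto.
  - apply dvd_mk. eapply AE_mono; [exact Hx|]. simpl. intros i Hi.
    destruct (constructive_indefinite_description _ (B i)) as [p [? ?]]; simpl; auto.
Qed.

Lemma pred_ext {A : Type} (P Q : A -> Prop) : (forall x, P x <-> Q x) -> P = Q.
Proof. intros H. extensionality x. apply propositional_extensionality. auto. Qed.

Lemma ideal_unit J u : is_ideal U J -> J u -> sdvd U u (sone U) -> J (sone U).
Proof. intros [_ [_ HJ]] Hu [z ->]. apply HJ; auto. Qed.

Lemma ideal_comb J x y a b : is_ideal U J -> J x -> J y -> J (sadd U (smul U a x) (smul U b y)).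
Proof. intros [_ [HA HM]] Hx Hy. apply HA; apply HM; auto. Qed.

Lemma max_gen m k : maximal_ideal U m -> ~ m k ->
  exists a r, m a /\ sone U = sadd U a (smul U r k).
Proof.
  intros [Hm [H1 Hmax]] Hk.
  set (K := fun x => exists a r, m a /\ x = sadd U a (smul U r k)).
  assert (HK : is_ideal U K).
  { destruct Hm as [H0 [HA HM]]. split; [|split].
    - exists (szero U), (szero U). split; [exact H0|]. ringid.
    - intros x y [a [r [Ha ->]]] [a' [r' [Ha' ->]]].
      exists (sadd U a a'), (sadd U r r'). split; [auto|]. ringid.
    - intros s x [a [r [Ha ->]]]. exists (smul U s a), (smul U s r). split; [auto|]. ringid. }
  destruct (Hmax K HK) as [E|E].
  - intros x Hx. exists x, (szero U). split; [exact Hx|]. ringid.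
  - exfalso. apply Hk. rewrite <- E. exists (szero U), (sone U). split; [apply Hm|]. ringid.
  - exact E.
Qed.

Lemma key m n k : maximal_ideal U m -> m n -> subset U (pr U n) (pr U k) -> m k.
Proof.
  intros Hm Hn Hs. destruct (classic (m k)) as [?|Hk]; [assumption|exfalso].
  destruct (max_gen m k Hm Hk) as [a [r [Ha E]]].
  destruct (gcd_ex n a) as [g [Hgn [Hga [_ [u [v Eg]]]]]].
  assert (Hg : m g) by (rewrite Eg; apply ideal_comb; auto; apply Hm).
  destruct (classic (sdvd U g (sone U))) as [Hu|Hu].
  - apply (proj1 (proj2 Hm)). eapply ideal_unit; eauto. apply Hm.
  - destruct (nonunit_pr g Hu) as [q [Hq Hqg]].
    assert (Hqk : pr U k q) by (apply Hs; split; [exact Hq|eapply dvd_trans; eauto]).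
    apply (sprime_not_dvd_one q Hq). rewrite E. apply dvd_add.
    + eapply dvd_trans; eauto.
    + apply dvd_mul_l. apply Hqk.
Qed.

Lemma pr_inter a b : exists g, pr U g = (fun x => pr U a x /\ pr U b x) /\
  exists u v, g = sadd U (smul U u a) (smul U v b).
Proof.
  destruct (gcd_ex a b) as [g [Ha [Hb [Hgr E]]]]. exists g. split; [|exact E].
  apply pred_ext. intros x. split.
  - intros [Hx Hd]. split; split; auto; eapply dvd_trans; eauto.
  - intros [[Hx Ha'] [_ Hb']]. split; auto.
Qed.

Lemma pr_empty_eq n : (forall p, ~ pr U n p) -> pr U n = (fun _ => False).
Proof. intros H. apply pred_ext. intros x; split; [apply H|tauto]. Qed.

Lemma all_dvd_zero n : subset U (pr U n) (pr U (szero U)).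
Proof. intros x [Hx _]. split; [exact Hx| apply dvd_zero]. Qed.

Lemma zero_nonunit : ~ sdvd U (szero U) (sone U).
Proof.
  unfold szero, sone. rewrite dvd_mk. intros H. eapply AE_contra; [exact H|].
  intros i Hi. apply Z.divide_0_l in Hi. lia.
Qed.

Lemma max_ideal_nonunit m n : maximal_ideal U m -> m n -> ~ sdvd U n (sone U).
Proof. intros Hm Hn Hu. apply (proj1 (proj2 Hm)). eapply ideal_unit; eauto. apply Hm. Qed.

Lemma partA m : maximal_ideal U m -> maximal_filter U (Fof U m).
Proof.
  intros Hm. assert (HF : is_filter U (Fof U m)).
  { split; [|split; [|split]].
    - intros S [n [_ ->]]. exists n. reflexivity.
    - intros [n [Hn E]]. destruct (nonunit_pr n (max_ideal_nonunit m n Hm Hn)) as [p Hp].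
      rewrite <- E in Hp. exact Hp.
    - intros S T [a [Ha ->]] [b [Hb ->]]. destruct (pr_inter a b) as [g [Eg [u [v Euv]]]].
      exists g. split; [|symmetry; exact Eg]. rewrite Euv. apply ideal_comb; auto. apply Hm.
    - intros n k [n' [Hn' E]] Hs. exists k. split; [|reflexivity].
      eapply key; eauto. rewrite <- E. exact Hs. }
  split; [exact HF|]. intros [G [HG [Hsub Hne]]].
  destruct (classic (exists S, G S /\ ~ Fof U m S)) as [[S [HGS HnS]]|Hno].
  - destruct (proj1 HG S HGS) as [k ->].
    assert (Hk : ~ m k) by (intros Hk; apply HnS; exists k; auto).
    destruct (max_gen m k Hm Hk) as [a [r [Ha E]]].
    assert (HGa : G (pr U a)) by (apply Hsub; exists a; auto).
    pose proof (proj1 (proj2 (proj2 HG)) _ _ HGa HGS) as Hint.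
    apply (proj1 (proj2 HG)).
    replace (fun _ : starZ U => False) with (fun x => pr U a x /\ pr U k x); [exact Hint|].
    apply pred_ext. intros q; split; [|tauto]. intros [[Hq Hqa] [_ Hqk]].
    apply (sprime_not_dvd_one q Hq). rewrite E. apply dvd_add; auto. apply dvd_mul_l; auto.
  - apply Hne. apply pred_ext. intros S; split; [|apply Hsub].
    intros HS. apply NNPP. intros HnS. apply Hno. exists S; auto.
Qed.

Lemma partB m1 m2 : maximal_ideal U m1 -> maximal_ideal U m2 -> Fof U m1 = Fof U m2 -> m1 = m2.
Proof.
  assert (Hgen : forall m1 m2, maximal_ideal U m2 -> Fof U m1 = Fof U m2 -> forall x, m1 x -> m2 x).
  { intros a b Hb E x Hx. assert (Fof U a (pr U x)) as H by (exists x; auto).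
    rewrite E in H. destruct H as [k [Hk Ek]]. eapply key; eauto. rewrite <- Ek. intros y; auto. }
  intros H1 H2 E. apply pred_ext. intros x; split.
  - apply Hgen; auto.
  - apply Hgen; auto.
Qed.

Lemma partC F : maximal_filter U F -> exists m, maximal_ideal U m /\ Fof U m = F.
Proof.
  intros [HF Hmax].
  destruct HF as [Hin [Hemp [Hint Hup]]].
  assert (H0 : F (pr U (szero U))).
  { apply NNPP. intros H0. apply Hmax. exists (fun S => S = pr U (szero U)).
    split; [|split].
    - split; [|split; [|split]].
      + intros S ->. exists (szero U); reflexivity.
      + intros E. destruct (nonunit_pr _ zero_nonunit) as [p Hp]. rewrite <- E in Hp. exact Hp.
      + intros S T -> ->. apply pred_ext. tauto.
      + intros n k E Hs. apply pred_ext. intros x; split.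
        * intros [Hx _]. split; [exact Hx|apply dvd_zero].
        * intros Hx. apply Hs. rewrite E. exact Hx.
    - intros S HS. exfalso. apply H0. destruct (Hin S HS) as [n ->].
      eapply Hup; [exact HS|apply all_dvd_zero].
    - intros E. apply H0. rewrite <- E. reflexivity. }
  set (m := fun n => F (pr U n)).
  assert (Hid : is_ideal U m).
  { split; [exact H0|split].
    - intros x y Hx Hy. unfold m in *. destruct (pr_inter x y) as [g [Eg _]].
      pose proof (Hint _ _ Hx Hy) as Hxy. rewrite <- Eg in Hxy.
      eapply Hup; [exact Hxy|]. intros q [Hq Hqg]. split; [exact Hq|].
      assert (Hxq : pr U x q /\ pr U y q) by (change ((fun x0 => pr U x x0 /\ pr U y x0) q); rewrite <- Eg; split; auto).
      destruct Hxq as [[_ A] [_ B]]. apply dvd_add; auto.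
    - intros r x Hx. unfold m in *. eapply Hup; [exact Hx|].
      intros q [Hq Hqx]. split; [exact Hq|]. apply dvd_mul_l; auto. }
  exists m. split.
  - split; [exact Hid|split].
    + intros H1. apply Hemp. unfold m in H1.
      replace (fun _ : starZ U => False) with (pr U (sone U)); [exact H1|].
      apply pr_empty_eq. intros p. apply unit_pr_empty. apply dvd_refl.
    + intros K HK Hs. destruct (classic (K = m)) as [E|Hne]; [left; exact E|right].
      destruct (classic (exists x, K x /\ ~ m x)) as [[x [HKx Hmx]]|Hno].
      2:{ exfalso. apply Hne. apply pred_ext. intros x; split; [|apply Hs].
          intros Hx. apply NNPP. intros Hmx. apply Hno. exists x; auto. }
      destruct (classic (exists a, F (pr U a) /\ forall q, ~ (pr U a q /\ pr U x q)))
        as [[a [Fa Hdis]]|Hnd].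
      * destruct (gcd_ex a x) as [g [Hga [Hgx [_ [u [v Eg]]]]]].
        destruct (classic (sdvd U g (sone U))) as [Hu|Hu].
        -- apply (ideal_unit K g HK); [|exact Hu]. rewrite Eg. apply ideal_comb; auto.
        -- exfalso. destruct (nonunit_pr g Hu) as [q [Hq Hqg]].
           apply (Hdis q). split; split; auto; eapply dvd_trans; eauto.
      * exfalso. apply Hmax.
        exists (fun S => in_prZ U S /\ exists a, F (pr U a) /\
                  subset U (fun q => pr U a q /\ pr U x q) S).
        split; [|split].
        -- split; [|split; [|split]].
           ++ intros S [HS _]; exact HS.
           ++ intros [_ [a [Fa Hs']]]. apply Hnd. exists a. split; [exact Fa|].
              intros q Hq. exact (Hs' q Hq).
           ++ intros S T [[s ->] [a [Fa Ha]]] [[t ->] [b [Fb Hb]]].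
              destruct (pr_inter s t) as [g [Eg _]].
              destruct (pr_inter a b) as [h [Eh _]].
              split; [exists g; symmetry; exact Eg|].
              exists h. split.
              ** rewrite Eh. apply Hint; auto.
              ** intros q [Hqh Hqx]. rewrite Eh in Hqh. destruct Hqh as [A B].
                 split; [apply Ha|apply Hb]; split; auto.
           ++ intros n k [_ [a [Fa Ha]]] Hs'. split; [exists k; reflexivity|].
              exists a. split; auto. intros q Hq. apply Hs', Ha, Hq.
        -- intros S HS. split; [exact (Hin S HS)|]. destruct (Hin S HS) as [s ->].
           exists s. split; auto. intros q [Hq _]; exact Hq.
        -- intros E. apply Hmx. unfold m.
           assert (HG : (fun S => in_prZ U S /\ exists a, F (pr U a) /\
                  subset U (fun q => pr U a q /\ pr U x q) S) (pr U x)).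
           { split; [exists x; reflexivity|]. exists (szero U). split; [exact H0|].
             intros q [_ Hq]; exact Hq. }
           rewrite E in HG. exact HG.
  - apply pred_ext. intros S; split.
    + intros [n [Hn ->]]. exact Hn.
    + intros HS. destruct (Hin S HS) as [n ->]. exists n; split; [exact HS|reflexivity].
Qed.

Lemma partD m : maximal_ideal U m ->
  (principal_filter U (Fof U m) <-> exists p, sprime U p /\ m = pZ U p).
Proof.
  intros Hm. split.
  - intros [n Hn].
    assert (Hpn : Fof U m (pr U n)) by (apply Hn; [exists n; reflexivity| intros x; auto]).
    destruct Hpn as [k [Hk Ek]].
    assert (Hnm : m n) by (eapply key; eauto; rewrite Ek; intros x; auto).
    destruct (nonunit_pr n (max_ideal_nonunit m n Hm Hnm)) as [p [Hp Hpn]].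
    assert (Hpm : m p).
    { destruct (classic (m p)) as [?|Hnp]; [assumption|exfalso].
      destruct (max_gen m p Hm Hnp) as [a [r [Ha E]]].
      assert (Hsa : subset U (pr U n) (pr U a)) by (apply Hn; [exists a; reflexivity|exists a; auto]).
      destruct (Hsa p (conj Hp Hpn)) as [_ Hpa].
      apply (sprime_not_dvd_one p Hp). rewrite E. apply dvd_add; auto.
      apply dvd_mul_l, dvd_refl. }
    exists p. split; [exact Hp|]. apply pred_ext. intros x; split.
    + intros Hx. assert (Hsx : subset U (pr U n) (pr U x)) by (apply Hn; [exists x; reflexivity|exists x; auto]).
      destruct (Hsx p (conj Hp Hpn)) as [_ [z ->]]. exists z. apply smul_comm.
    + intros [z ->]. rewrite smul_comm. apply Hm. exact Hpm.
  - intros [p [Hp ->]]. exists p. intros S [k ->]. split.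
    + intros [k' [[z ->] Ek]]. rewrite Ek. intros q [Hq Hqp]. split; auto.
      eapply dvd_trans; [exact Hqp|]. apply dvd_mul_r, dvd_refl.
    + intros Hs. destruct (Hs p (conj Hp (dvd_refl p))) as [_ [z ->]].
      exists (smul U z p). split; [|reflexivity]. exists z. apply smul_comm.
Qed.

End S.

Theorem theorem4p6 (I : Type) (U : (I -> Prop) -> Prop)
  (hI : countably_infinite I) (hU : ultrafilter U) (hUnp : nonprincipal U) :
  (* m |-> F(m) maps maximal ideals to maximal filters ... *)
  (forall m, maximal_ideal U m -> maximal_filter U (Fof U m)) /\
  (* ... injectively ... *)
  (forall m1 m2, maximal_ideal U m1 -> maximal_ideal U m2 ->
     Fof U m1 = Fof U m2 -> m1 = m2) /\
  (* ... and onto the maximal filters *)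
  (forall F, maximal_filter U F -> exists m, maximal_ideal U m /\ Fof U m = F) /\
  (* F(m) principal iff m = p *Z with p in P( *N ) *)
  (forall m, maximal_ideal U m ->
     (principal_filter U (Fof U m) <-> exists p, sprime U p /\ m = pZ U p)).
Proof.
  split; [|split; [|split]].
  - exact (partA I U hU).
  - exact (partB I U hU).
  - exact (partC I U hU).
  - exact (partD I U hU).
Qed.
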